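(* Let $(\rho,\sigma)\in\mathfrak V$ with $\sigma\le0$ and $P,Q\in W^{(l)}\setminus\{0\}$. If $[P,Q]_{\rho,\sigma}=0$, then $\mathrm{st}_{\rho,\sigma}(P)$ and $\mathrm{st}_{\rho,\sigma}(Q)$ are aligned, and $\mathrm{en}_{\rho,\sigma}(P)$ and $\mathrm{en}_{\rho,\sigma}(Q)$ are aligned.
   Context: $K$ is a field of characteristic zero, $l\in\mathbb{N}$. $W^{(l)}$ is the associative $K$-algebra with $K$-basis $\{X^{i/l}Y^j:i\in\mathbb{Z},j\in\mathbb{N}_0\}$, powers of $X$ multiplying as Laurent monomials and $[Y,X^\alpha]=\alpha X^{\alpha-1}$ for $\alpha\in\frac1l\mathbb{Z}$. $\Psi^{(l)}(X^{i/l}Y^j)=x^{i/l}y^j\in K[x^{\pm1/l},y]$; supports are sets of exponents with nonzero coefficient. $\mathfrak V=\{(\rho,\sigma)\in\mathbb{Z}^2:\gcd(\rho,\sigma)=1,\rho+\sigma>0\}$. For $P\ne0$: $v_{\rho,\sigma}(P)=\max\{\rho a+\sigma b:(a,b)\in\mathrm{Supp}(P)\}$; $\ell_{\rho,\sigma}(P)$ = sum of terms of $\Psi^{(l)}(P)$ attaining it; $\mathrm{st}_{\rho,\sigma}(P)$: among points $(a,b)\in\mathrm{Supp}(\ell_{\rho,\sigma}(P))$ maximizing $a-b$, the one with largest $a$; $\mathrm{en}_{\rho,\sigma}(P)$: among those maximizing $b-a$, the one with largest $b$. $[P,Q]_{\rho,\sigma}:=0$ if $[P,Q]=0$ or $v_{\rho,\sigma}([P,Q])<v_{\rho,\sigma}(P)+v_{\rho,\sigma}(Q)-(\rho+\sigma)$,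 else $\ell_{\rho,\sigma}([P,Q])$. Vectors $(a_1,a_2),(b_1,b_2)$ are aligned if $a_1b_2-a_2b_1=0$. *)

(* Defs.v *)
From HB Require Import structures.
From mathcomp Require Import all_boot all_order all_algebra.
From mathcomp Require Import finmap.
Set Implicit Arguments. Unset Strict Implicit. Unset Printing Implicit Defensive.
Import Order.TTheory GRing.Theory Num.Theory.
Local Open Scope ring_scope.

(* Elements of W^(l): finitely supported coefficient functions on the basis
   {X^{i/l} Y^j : i in Z, j in N}; the basis element X^{i/l}Y^j is indexed by
   (i, j) : int * nat. *)
Definition W (K : fieldType) := {fsfun (int * nat) -> K with 0}.

Definition W0 (K : fieldType) : W K := [fsfun].

Definition ffall (K : fieldType) (x : K) (k : nat) : K :=
  \prod_(i < k) (x - i%:R).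

(* Product of basis elements:
   (X^{a/l} Y^j)(X^{b/l} Y^m) = sum_{k<=j} C(j,k) (b/l)^{(k)} X^{(a+b-kl)/l} Y^{j+m-k},
   which is the multiplication of W^(l) determined by the Laurent rule for the
   powers of X and [Y, X^alpha] = alpha X^(alpha-1). *)
Definition Wmul_cands (l : nat) (K : fieldType) (P Q : W K) : seq (int * nat) :=
  flatten [seq [seq (p.1 + q.1 - (k * l)%:Z, (p.2 + q.2 - k)%N) | k <- iota 0 p.2.+1]
          | p <- enum_fset (finsupp P), q <- enum_fset (finsupp Q)].

Definition Wmul_coef (l : nat) (K : fieldType) (P Q : W K) (x : int * nat) : K :=
  \sum_(p <- enum_fset (finsupp P)) \sum_(q <- enum_fset (finsupp Q))
    \sum_(k < p.2.+1)
      (if (x == (p.1 + q.1 - (k * l)%:Z, (p.2 + q.2 - k)%N))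
       then P p * Q q * ('C(p.2, k))%:R * ffall (q.1%:~R / l%:R) k
       else 0).

Definition Wcomm (l : nat) (K : fieldType) (P Q : W K) : W K :=
  [fsfun x in [fset y | y in Wmul_cands l P Q ++ Wmul_cands l Q P]%fset =>
     Wmul_coef l P Q x - Wmul_coef l Q P x].

Definition expo (l : nat) (x : int * nat) : rat * rat :=
  (x.1%:~R / l%:R, x.2%:R).

Definition Supp (l : nat) (K : fieldType) (P : W K) : seq (rat * rat) :=
  [seq expo l x | x <- enum_fset (finsupp P)].

Definition maxf (T : Type) (f : T -> rat) (x0 : T) (s : seq T) : rat :=
  \big[Num.max/f (head x0 s)]_(x <- s) f x.

Definition wt (rho sigma : int) (e : rat * rat) : rat :=
  rho%:~R * e.1 + sigma%:~R * e.2.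

Definition vrs (l : nat) (K : fieldType) (rho sigma : int) (P : W K) : rat :=
  maxf (wt rho sigma) (0, 0) (Supp l P).

(* l_{rho,sigma}(P): sum of the terms attaining v_{rho,sigma}(P) (seen through
   Psi^(l), i.e. as the corresponding element with the same coefficients). *)
Definition ellrs (l : nat) (K : fieldType) (rho sigma : int) (P : W K) : W K :=
  [fsfun x in finsupp P =>
     if wt rho sigma (expo l x) == vrs l rho sigma P then P x else 0].

Definition bracket_rs (l : nat) (K : fieldType) (rho sigma : int) (P Q : W K) : W K :=
  let C := Wcomm l P Q in
  if (C == W0 K) ||
     (vrs l rho sigma C < vrs l rho sigma P + vrs l rho sigma Q - (rho + sigma)%:~R)
  then W0 K else ellrs l rho sigma C.

Definition st_rs (l : nat) (K : fieldType) (rho sigma : int) (P : W K) : rat * rat :=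
  let s := Supp l (ellrs l rho sigma P) in
  let m := maxf (fun e => e.1 - e.2) (0, 0) s in
  let s' := [seq e <- s | e.1 - e.2 == m] in
  let a := maxf fst (0, 0) s' in
  head (0, 0) [seq e <- s' | e.1 == a].

Definition en_rs (l : nat) (K : fieldType) (rho sigma : int) (P : W K) : rat * rat :=
  let s := Supp l (ellrs l rho sigma P) in
  let m := maxf (fun e => e.2 - e.1) (0, 0) s in
  let s' := [seq e <- s | e.2 - e.1 == m] in
  let b := maxf snd (0, 0) s' in
  head (0, 0) [seq e <- s' | e.2 == b].

Definition aligned (a b : rat * rat) : Prop := a.1 * b.2 - a.2 * b.1 = 0.

Definition in_frakV (rho sigma : int) : Prop :=
  gcdz rho sigma = 1%N /\ 0 < rho + sigma.

(* Main.v *)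
Require Import Defs.
From HB Require Import structures.
From mathcomp Require Import all_boot all_order all_algebra.
From mathcomp Require Import finmap.
From mathcomp Require Import ring lra zify.
Import Order.TTheory GRing.Theory Num.Theory.
Local Open Scope ring_scope.
Lemma maxf_ge (T : eqType) (f : T -> rat) x0 (s : seq T) e :
  e \in s -> f e <= maxf f x0 s.
Proof. by move=> es; rewrite /maxf; apply: (le_bigmax_seq _ e xpredT). Qed.

Lemma bigmax_att (T : eqType) (f : T -> rat) i (s : seq T) :
  \big[Num.max/i]_(x <- s) f x = i \/ exists2 e, e \in s & \big[Num.max/i]_(x <- s) f x = f e.
Proof.
elim: s => [|x s IH]; first by left; rewrite big_nil.
rewrite big_cons /Order.max; case: ifP => _.
- case: IH => [->|[e es ->]]; first by left.
  by right; exists e => //; rewrite inE es orbT.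
- right; exists x => //; exact: mem_head.
Qed.

Lemma maxf_in (T : eqType) (f : T -> rat) x0 (s : seq T) :
  s != [::] -> exists2 e, e \in s & maxf f x0 s = f e.
Proof.
case: s => [//|x s] _; rewrite /maxf /=.
case: (@bigmax_att T f (f x) (x :: s)) => [->|//]; exists x => //; exact: mem_head.
Qed.

Definition sel (f g : rat * rat -> rat) (s : seq (rat * rat)) : rat * rat :=
  let m := maxf f (0, 0) s in
  let s' := [seq e <- s | f e == m] in
  let a := maxf g (0, 0) s' in
  head (0, 0) [seq e <- s' | g e == a].

Lemma sel_spec f g s : s != [::] ->
  [/\ sel f g s \in s, forall e, e \in s -> f e <= f (sel f g s) &
      forall e, e \in s -> f e = f (sel f g s) -> g e <= g (sel f g s)].
Proof.
move=> sn; rewrite /sel.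
set m := maxf f (0, 0) s; set s' := [seq e <- s | f e == m].
set a := maxf g (0, 0) s'.
have [e0 e0s e0m] := @maxf_in _ f (0,0) s sn.
have s'n : s' != [::].
  apply/eqP => E; suff : e0 \in s' by rewrite E.
  by rewrite mem_filter e0s -e0m eqxx.
have [e1 e1s e1m] := @maxf_in _ g (0,0) _ s'n.
have hn : [seq e <- s' | g e == a] != [::].
  apply/eqP => E; suff : e1 \in [seq e <- s' | g e == a] by rewrite E.
  by rewrite mem_filter e1s -e1m eqxx.
have hin : head (0, 0) [seq e <- s' | g e == a] \in [seq e <- s' | g e == a].
  move: hn; set L := filter _ s'; case: L => // x t _; exact: mem_head.
move: hin; rewrite mem_filter => /andP [/eqP ga]; rewrite mem_filter => /andP [/eqP fm cs].
split => // [e es|e es].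
  by rewrite fm; apply: maxf_ge.
rewrite fm ga => fe; apply: maxf_ge; by rewrite mem_filter fe eqxx.
Qed.

Lemma st_sel l (K : fieldType) rho sigma (P : W K) :
  st_rs l rho sigma P = sel (fun e => e.1 - e.2) fst (Supp l (ellrs l rho sigma P)).
Proof. by []. Qed.

Lemma en_sel l (K : fieldType) rho sigma (P : W K) :
  en_rs l rho sigma P = sel (fun e => e.2 - e.1) snd (Supp l (ellrs l rho sigma P)).
Proof. by []. Qed.

Lemma W0E (K : fieldType) x : W0 K x = 0.
Proof. by rewrite /W0 fsfunE. Qed.

Lemma ellrsE l (K : fieldType) rho sigma (P : W K) x :
  ellrs l rho sigma P x =
  if (x \in finsupp P) && (wt rho sigma (expo l x) == vrs l rho sigma P) then P x else 0.
Proof. by rewrite /ellrs fsfunE; case: (x \in finsupp P). Qed.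

Lemma mem_finsupp_ellrs l (K : fieldType) rho sigma (P : W K) x :
  (x \in finsupp (ellrs l rho sigma P)) =
  (x \in finsupp P) && (wt rho sigma (expo l x) == vrs l rho sigma P).
Proof.
rewrite !mem_finsupp ellrsE mem_finsupp.
case E: (P x == 0); first by rewrite /= eqxx.
by rewrite /=; case: (wt _ _ _ == _); rewrite /= ?E ?eqxx.
Qed.

Lemma Wneq0 (K : fieldType) (P : W K) : P != W0 K -> exists x, x \in finsupp P.
Proof.
move=> PN; have : forall x, (x \in finsupp P) = (x \in enum_fset (finsupp P)) by [].
case: (enum_fset (finsupp P)) => [|y s] H; last by exists y; rewrite H mem_head.
case/eqP: PN; apply/fsfunP => x; rewrite W0E.
case: finsuppP => // xP; by move: xP; rewrite H.
Qed.

Lemma expo_inj l x y : (0 < l)%N -> expo l x = expo l y -> x = y.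
Proof.
move=> l0 [E1 E2].
have ln : (l%:R : rat) != 0 by rewrite pnatr_eq0 -lt0n.
move: E1 => /(congr1 (fun t => t * l%:R)); rewrite !divfK // => /intr_inj E1.
move/eqP: E2; rewrite eqr_nat => /eqP E2.
by case: x y E1 E2 => [? ?] [? ?] /= -> ->.
Qed.

Definition S0 {K : fieldType} (P Q : W K) (x : int * nat) : K :=
  \sum_(p <- enum_fset (finsupp P)) \sum_(q <- enum_fset (finsupp Q))
    (if x == (p.1 + q.1, (p.2 + q.2)%N) then P p * Q q else 0).

Definition S1 l {K : fieldType} (P Q : W K) (x : int * nat) : K :=
  \sum_(p <- enum_fset (finsupp P)) \sum_(q <- enum_fset (finsupp Q))
    \sum_(k < p.2)
      (if x == (p.1 + q.1 - (k.+1 * l)%:Z, (p.2 + q.2 - k.+1)%N)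
       then P p * Q q * ('C(p.2, k.+1))%:R * ffall (q.1%:~R / l%:R) k.+1
       else 0).

Lemma Wmul_coef_split l (K : fieldType) (P Q : W K) x :
  Wmul_coef l P Q x = S0 P Q x + S1 l P Q x.
Proof.
rewrite /Wmul_coef /S0 /S1 -big_split; apply: eq_bigr => p _.
rewrite -big_split; apply: eq_bigr => q _; rewrite big_ord_recl /=.
congr (_ + _).
  by rewrite mul0n subr0 subn0 bin0 /ffall big_ord0 !mulr1.
Qed.

Lemma S0C (K : fieldType) (P Q : W K) x : S0 P Q x = S0 Q P x.
Proof.
rewrite /S0 exchange_big; apply: eq_bigr => q _; apply: eq_bigr => p _.
by rewrite addrC addnC mulrC.
Qed.

Lemma sum3_single (K : fieldType) (A B : eqType) (s : seq A) (t : seq B)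
    (n : A -> nat) (G : A -> B -> nat -> K) a b :
  uniq s -> uniq t -> a \in s -> b \in t ->
  (forall p q k, p \in s -> q \in t -> (k < n p)%N -> G p q k != 0 ->
     [/\ p = a, q = b & k = 0%N]) ->
  \sum_(p <- s) \sum_(q <- t) \sum_(k < n p) G p q k =
  if (0 < n a)%N then G a b 0%N else 0.
Proof.
move=> us ut a_s b_t H.
rewrite (bigD1_seq a) //= [X in _ + X]big1_seq ?addr0; last first.
  move=> p /andP [pa ps]; apply: big1_seq => q /andP [_ qt]; apply: big1 => k _.
  apply/eqP; apply: contraT => /(H _ _ _ ps qt (ltn_ord k)) [pe _ _].
  by rewrite pe eqxx in pa.
rewrite (bigD1_seq b) //= [X in _ + X]big1_seq ?addr0; last first.
  move=> q /andP [qb qt]; apply: big1 => k _.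
  apply/eqP; apply: contraT => /(H _ _ _ a_s qt (ltn_ord k)) [_ qe _].
  by rewrite qe eqxx in qb.
case E: (n a) => [|m] /=; first by rewrite big_ord0.
rewrite big_ord_recl big1 ?addr0 // => k _.
apply/eqP; apply: contraT => /(H _ _ _ a_s b_t); rewrite E => /(_ (ltn_ord _)) [_ _].
by rewrite lift0.
Qed.

Lemma lead_exists l (K : fieldType) rho sigma (P : W K) :
  P != W0 K -> exists x, x \in finsupp (ellrs l rho sigma P).
Proof.
move=> /Wneq0 [x xP].
have sn : Supp l P != [::].
  apply/eqP => E; have : expo l x \in Supp l P by apply: map_f.
  by rewrite E.
have [e eS ev] := @maxf_in _ (wt rho sigma) (0, 0) _ sn.
case/mapP: eS => y yP ey; exists y.
by rewrite mem_finsupp_ellrs yP /vrs ev ey eqxx.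
Qed.

Lemma lead_data l (K : fieldType) rho sigma (P : W K) f g :
  P != W0 K -> exists iP,
  [/\ iP \in finsupp P, expo l iP = sel f g (Supp l (ellrs l rho sigma P)),
      wt rho sigma (expo l iP) = vrs l rho sigma P,
      (forall p, p \in finsupp P -> wt rho sigma (expo l p) <= vrs l rho sigma P) &
      (forall p, p \in finsupp P -> wt rho sigma (expo l p) = vrs l rho sigma P ->
         f (expo l p) <= f (expo l iP)) /\
      (forall p, p \in finsupp P -> wt rho sigma (expo l p) = vrs l rho sigma P ->
         f (expo l p) = f (expo l iP) -> g (expo l p) <= g (expo l iP))].
Proof.
move=> /(@lead_exists l K rho sigma P) [x xL].
set S := Supp l (ellrs l rho sigma P).
have sn : S != [::].
  apply/eqP => E; have : expo l x \in S by apply: map_f.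
  by rewrite E.
have [cS fc gc] := @sel_spec f g S sn.
case/mapP: (cS) => iP iL ci; exists iP.
have iL' : iP \in finsupp (ellrs l rho sigma P) by [].
move: (iL'); rewrite mem_finsupp_ellrs => /andP [iPs /eqP iw].
have inS : forall p, p \in finsupp P -> wt rho sigma (expo l p) = vrs l rho sigma P ->
   expo l p \in S.
  move=> p ps pw; apply: map_f; by rewrite mem_finsupp_ellrs ps pw eqxx.
split => //.
- move=> p ps; apply: maxf_ge; exact: map_f.
- split.
  + by move=> p ps pw; rewrite -ci; apply: fc; apply: inS.
  + by move=> p ps pw; rewrite -ci => fe; apply: gc => //; apply: inS.
Qed.

Definition sep (f g : rat * rat -> rat) := forall u v u' v' : rat * rat,
  u.1 + v.1 = u'.1 + v'.1 -> u.2 + v.2 = u'.2 + v'.2 ->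
  f u <= f u' -> f v <= f v' -> (f u = f u' -> g u <= g u') ->
  (f v = f v' -> g v <= g v') -> u = u' /\ v = v'.

Lemma uniq_geom (rho sigma : int) (f g : rat * rat -> rat) (a b ep eq : rat * rat)
    (vP vQ : rat) (k : nat) :
  0 < rho + sigma -> sep f g ->
  wt rho sigma a = vP -> wt rho sigma b = vQ ->
  wt rho sigma ep <= vP -> wt rho sigma eq <= vQ ->
  (wt rho sigma ep = vP -> f ep <= f a) ->
  (wt rho sigma ep = vP -> f ep = f a -> g ep <= g a) ->
  (wt rho sigma eq = vQ -> f eq <= f b) ->
  (wt rho sigma eq = vQ -> f eq = f b -> g eq <= g b) ->
  a.1 + b.1 - 1 = ep.1 + eq.1 - k%:R -> a.2 + b.2 - 1 = ep.2 + eq.2 - k%:R ->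
  (0 < k)%N -> [/\ ep = a, eq = b & k = 1%N].
Proof.
move=> rs sp wa wb wep weq f1 g1 f2 g2 E1 E2 k0.
have rsq : 0 < (rho + sigma)%:~R :> rat by rewrite ltr0z.
have D : wt rho sigma ep + wt rho sigma eq - wt rho sigma a - wt rho sigma b =
   (rho + sigma)%:~R * (k%:R - 1).
  have -> : wt rho sigma ep + wt rho sigma eq - wt rho sigma a - wt rho sigma b =
    rho%:~R * (ep.1 + eq.1 - a.1 - b.1) + sigma%:~R * (ep.2 + eq.2 - a.2 - b.2).
    by rewrite /wt; ring.
  have -> : ep.1 + eq.1 - a.1 - b.1 = k%:R - 1 by lra.
  have -> : ep.2 + eq.2 - a.2 - b.2 = k%:R - 1 by lra.
  by rewrite intrD; ring.
have kle : (k%:R - 1 : rat) <= 0.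
  rewrite -(pmulr_rle0 _ rsq) -D; lra.
have k1 : k = 1%N.
  have : (k%:R <= 1%:R :> rat) by lra.
  rewrite ler_nat => kl; lia.
subst k.
have wp : wt rho sigma ep = vP by lra.
have wq : wt rho sigma eq = vQ by lra.
have [-> ->] : ep = a /\ eq = b.
  apply: sp; [lra | lra | exact: f1 | exact: f2 | exact: g1 | exact: g2].
by [].
Qed.

Lemma intr_natE (R : pzRingType) (n : nat) : (n%:Z)%:~R = n%:R :> R.
Proof. by []. Qed.

Lemma intr_neq0K (K : fieldType) (z : int) :
  [pchar K] =i pred0 -> z != 0 -> z%:~R != 0 :> K.
Proof.
move=> /pcharf0P H; case: z => n nz.
  by rewrite intr_natE H.
by rewrite NegzE intrN oppr_eq0 intr_natE H.
Qed.

Lemma expo1_sum l (x y : int) (m : nat) : (0 < l)%N ->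
  x%:~R / l%:R + y%:~R / l%:R - m%:R = ((x + y - (m * l)%:Z)%:~R / l%:R : rat).
Proof.
move=> l0; have lnR : (l%:R : rat) != 0 by rewrite pnatr_eq0 -lt0n.
rewrite intrB intrD intr_natE natrM; field; exact: lnR.
Qed.

Lemma main_gen (K : fieldType) l rho sigma (P Q : W K) f g :
  [pchar K] =i pred0 -> (0 < l)%N -> 0 < rho + sigma -> sep f g ->
  P != W0 K -> Q != W0 K -> bracket_rs l rho sigma P Q = W0 K ->
  aligned (sel f g (Supp l (ellrs l rho sigma P)))
          (sel f g (Supp l (ellrs l rho sigma Q))).
Proof.
move=> ch l0 rs sp PN QN Hb.
have [iP [iPs eP wP bP [fP gP]]] := @lead_data l K rho sigma P f g PN.
have [iQ [iQs eQ wQ bQ [fQ gQ]]] := @lead_data l K rho sigma Q f g QN.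
rewrite /aligned -eP -eQ.
case: (eqVneq ((expo l iP).1 * (expo l iQ).2 - (expo l iP).2 * (expo l iQ).1) 0) => // Hna.
exfalso.
have lnR : (l%:R : rat) != 0 by rewrite pnatr_eq0 -lt0n.
have lnK : (l%:R : K) != 0 by move/pcharf0P: ch => ->; rewrite -lt0n.
have s0 : (0 < iP.2 + iQ.2)%N.
  rewrite lt0n; apply/negP => /eqP E.
  have h1 : iP.2 = 0%N by lia.
  have h2 : iQ.2 = 0%N by lia.
  by move: Hna; rewrite /expo /= h1 h2 !mulr0 mul0r subrr eqxx.
set z := (iP.1 + iQ.1 - (1 * l)%:Z, (iP.2 + iQ.2 - 1)%N).
have U : forall p q k, p \in finsupp P -> q \in finsupp Q -> (0 < k)%N ->
    (k <= p.2 + q.2)%N -> z == (p.1 + q.1 - (k * l)%:Z, (p.2 + q.2 - k)%N) ->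
    [/\ p = iP, q = iQ & k = 1%N].
  move=> p q k ps qs k0 kp /eqP [E1 E2].
  have E1' : (expo l iP).1 + (expo l iQ).1 - 1 = (expo l p).1 + (expo l q).1 - k%:R.
    rewrite /expo /= -[1 in LHS](mulr1n 1) !expo1_sum //; by rewrite E1.
  have E2' : (expo l iP).2 + (expo l iQ).2 - 1 = (expo l p).2 + (expo l q).2 - k%:R.
    have E2n : (iP.2 + iQ.2 + k = p.2 + q.2 + 1)%N by clear -E2 kp s0; move: E2 kp s0; move: (iP.2) (iQ.2) (p.2) (q.2) => a b c d; lia.
    have := congr1 (fun n => n%:R : rat) E2n; rewrite /expo /= !natrD => H; lra.
  have [H1 H2 H3] := @uniq_geom rho sigma f g (expo l iP) (expo l iQ) (expo l p)
    (expo l q) (vrs l rho sigma P) (vrs l rho sigma Q) k rs sp wP wQ (bP p ps) (bQ q qs)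
    (fP p ps) (gP p ps) (fQ q qs) (gQ q qs) E1' E2' k0.
  by split => //; [exact: (expo_inj _ _ _ l0 H1) | exact: (expo_inj _ _ _ l0 H2)].
have U' : forall q p k, q \in finsupp Q -> p \in finsupp P -> (0 < k)%N ->
    (k <= q.2 + p.2)%N -> z == (q.1 + p.1 - (k * l)%:Z, (q.2 + p.2 - k)%N) ->
    [/\ q = iQ, p = iP & k = 1%N].
  move=> q p k qs ps k0 kp; rewrite [q.1 + _]addrC [(q.2 + _)%N]addnC => Hz.
  have := U p q k ps qs k0 _ Hz; rewrite addnC => /(_ kp) [-> -> ->].
  by [].
have S1PQ : S1 l P Q z = P iP * Q iQ * iP.2%:R * (iQ.1%:~R / l%:R).
  rewrite /S1; apply: etrans; first apply: (@sum3_single K _ _ _ _ snd (fun p q (k : nat) => if z == (p.1 + q.1 - (k.+1 * l)%:Z, (p.2 + q.2 - k.+1)%N)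
       then P p * Q q * ('C(p.2, k.+1))%:R * ffall (q.1%:~R / l%:R) k.+1
       else 0) iP iQ); rewrite ?fset_uniq //; last first.
  { rewrite /=; case: ifP => [_|]; first by rewrite eqxx bin1 /ffall big_ord1 subr0.
    by move=> /negbT; rewrite lt0n negbK => /eqP ->; rewrite mulr0 mul0r. }
  move=> p q k ps qs kp; case: ifP => [Hz _|]; last by rewrite eqxx.
  have [-> -> /eqP] := U p q k.+1 ps qs isT (leq_trans kp (leq_addr _ _)) Hz.
  by rewrite eqSS => /eqP.
have S1QP : S1 l Q P z = Q iQ * P iP * iQ.2%:R * (iP.1%:~R / l%:R).
  rewrite /S1; apply: etrans; first apply: (@sum3_single K _ _ _ _ snd (fun p q (k : nat) => if z == (p.1 + q.1 - (k.+1 * l)%:Z, (p.2 + q.2 - k.+1)%N)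
       then Q p * P q * ('C(p.2, k.+1))%:R * ffall (q.1%:~R / l%:R) k.+1
       else 0) iQ iP); rewrite ?fset_uniq //; last first.
  { rewrite /=; case: ifP => [_|]; last first.
      by move=> /negbT; rewrite lt0n negbK => /eqP ->; rewrite mulr0 mul0r.
    rewrite [iQ.1 + _]addrC [(iQ.2 + _)%N]addnC eqxx.
    by rewrite bin1 /ffall big_ord1 subr0. }
  move=> q p k qs ps kp; case: ifP => [Hz _|]; last by rewrite eqxx.
  have [-> -> /eqP] := U' q p k.+1 qs ps isT (leq_trans kp (leq_addr _ _)) Hz.
  by rewrite eqSS => /eqP.
have zc : z \in Wmul_cands l P Q ++ Wmul_cands l Q P.
  rewrite mem_cat; case: (posnP iP.2) => [h0|hp].
  - have hq : (0 < iQ.2)%N by move: s0; rewrite h0.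
    apply/orP; right; apply/flattenP.
    exists [seq (iQ.1 + iP.1 - (k * l)%:Z, (iQ.2 + iP.2 - k)%N) | k <- iota 0 iQ.2.+1].
      exact: (allpairs_f (fun p q => [seq (p.1 + q.1 - (k * l)%:Z, (p.2 + q.2 - k)%N) | k <- iota 0 p.2.+1])).
    apply/mapP; exists 1%N; first by rewrite mem_iota.
    by rewrite /z [iQ.1 + _]addrC [(iQ.2 + _)%N]addnC.
  - apply/orP; left; apply/flattenP.
    exists [seq (iP.1 + iQ.1 - (k * l)%:Z, (iP.2 + iQ.2 - k)%N) | k <- iota 0 iP.2.+1].
      exact: (allpairs_f (fun p q => [seq (p.1 + q.1 - (k * l)%:Z, (p.2 + q.2 - k)%N) | k <- iota 0 p.2.+1])).
    apply/mapP; exists 1%N; first by rewrite mem_iota.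
    by [].
have Cz : Wcomm l P Q z =
    P iP * Q iQ * ((iP.2%:Z * iQ.1 - iQ.2%:Z * iP.1)%:~R / l%:R).
  rewrite /Wcomm fsfunE ifT; last by rewrite in_fset; exact: zc.
  rewrite !Wmul_coef_split S0C S1PQ S1QP.
  rewrite opprD addrACA subrr add0r intrB !intrM !intr_natE.
  by field.
have N0 : (iP.2%:Z * iQ.1 - iQ.2%:Z * iP.1) != 0.
  apply: contra Hna => /eqP E.
  have -> : (expo l iP).1 * (expo l iQ).2 - (expo l iP).2 * (expo l iQ).1 =
     - ((iP.2%:Z * iQ.1 - iQ.2%:Z * iP.1)%:~R / l%:R).
    by rewrite /expo /= intrB !intrM !intr_natE; field.
  by rewrite E mul0r oppr0.
have Cz0 : Wcomm l P Q z != 0.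
  rewrite Cz; apply: mulf_neq0; first apply: mulf_neq0.
  - by rewrite -mem_finsupp.
  - by rewrite -mem_finsupp.
  - by apply: mulf_neq0; [exact: intr_neq0K | rewrite invr_eq0].
have CN : Wcomm l P Q != W0 K.
  by apply: contra Cz0 => /eqP ->; rewrite W0E.
have wz : wt rho sigma (expo l z) =
    vrs l rho sigma P + vrs l rho sigma Q - (rho + sigma)%:~R.
  have ez1 : (expo l z).1 = (expo l iP).1 + (expo l iQ).1 - 1.
    by rewrite /expo /= -[1 in RHS](mulr1n 1) expo1_sum.
  have ez2 : (expo l z).2 = (expo l iP).2 + (expo l iQ).2 - 1.
    by rewrite /expo /= natrB // natrD.
  by rewrite -wP -wQ /wt ez1 ez2 intrD; ring.
have zle : wt rho sigma (expo l z) <= vrs l rho sigma (Wcomm l P Q).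
  by apply: maxf_ge; apply: map_f; rewrite mem_finsupp.
move: Hb; rewrite /bracket_rs; case: ifP.
  case/orP => [/eqP C0|Hlt] _; first by rewrite C0 eqxx in CN.
  by move: Hlt; rewrite -wz; lra.
move=> _ E.
have [x xL] := @lead_exists l K rho sigma _ CN.
by move: xL; rewrite E mem_finsupp W0E eqxx.
Qed.

Lemma sep_st : sep (fun e => e.1 - e.2) fst.
Proof.
move=> [u1 u2] [v1 v2] [w1 w2] [x1 x2] /= h1 h2 f1 f2 g1 g2.
have fu : u1 - u2 = w1 - w2 by lra.
have fv : v1 - v2 = x1 - x2 by lra.
have := g1 fu; have := g2 fv => ga gb.
have e1 : u1 = w1 by lra.
have e2 : v1 = x1 by lra.
have e3 : u2 = w2 by lra.
have e4 : v2 = x2 by lra.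
by rewrite e1 e2 e3 e4.
Qed.

Lemma sep_en : sep (fun e => e.2 - e.1) snd.
Proof.
move=> [u1 u2] [v1 v2] [w1 w2] [x1 x2] /= h1 h2 f1 f2 g1 g2.
have fu : u2 - u1 = w2 - w1 by lra.
have fv : v2 - v1 = x2 - x1 by lra.
have := g1 fu; have := g2 fv => ga gb.
have e1 : u2 = w2 by lra.
have e2 : v2 = x2 by lra.
have e3 : u1 = w1 by lra.
have e4 : v1 = x1 by lra.
by rewrite e1 e2 e3 e4.
Qed.

Theorem corollary2p7 (K : fieldType) (l : nat) (rho sigma : int) (P Q : W K) :
  [pchar K] =i pred0 -> (0 < l)%N ->
  in_frakV rho sigma -> sigma <= 0 ->
  P != W0 K -> Q != W0 K ->
  bracket_rs l rho sigma P Q = W0 K ->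
  aligned (st_rs l rho sigma P) (st_rs l rho sigma Q) /\
  aligned (en_rs l rho sigma P) (en_rs l rho sigma Q).
Proof.
move=> ch l0 [_ rs] _ PN QN Hb.
rewrite !st_sel !en_sel; split.
- exact: main_gen ch l0 rs sep_st PN QN Hb.
- exact: main_gen ch l0 rs sep_en PN QN Hb.
Qed.
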